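(* Let $A$ be a set of $n$ real numbers, let $\delta_0 \ge 0$, and let $\ell_1, \dots, \ell_K$ be lines in $\mathbb{R}^2$ of the form $y = \lambda_i x + \mu_i$ with $\lambda_i \neq 0$, each of which satisfies $|\ell_i \cap (A \times A)| \ge n^{1-\delta_0}$. Then at least $K^2 n^{-2\delta_0}/2$ of the ordered pairs $(i,j) \in \{1,\dots,K\}^2$ satisfy $$|Y(\ell_i) \cap Y(\ell_j)| \ge n^{1-2\delta_0}/2.$$
   Context: For a line $\ell$, $Y(\ell)$ denotes the projection of $\ell \cap (A \times A)$ onto the $y$-axis, i.e. $Y(\ell) = \{ y : (x,y) \in \ell \cap (A\times A) \text{ for some } x\}$. *)

(* Defs.v *)
From HB Require Import structures.
From mathcomp Require Import all_boot all_order all_algebra.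
From mathcomp Require Import reals exp.
Set Implicit Arguments. Unset Strict Implicit. Unset Printing Implicit Defensive.
Import Order.TTheory GRing.Theory Num.Theory.
Local Open Scope ring_scope.

Definition line_pts (R : realType) (A : seq R) (lam mu : R) : seq (R * R) :=
  [seq p <- [seq (x, y) | x <- A, y <- A] | p.2 == lam * p.1 + mu].

Definition Yproj (R : realType) (A : seq R) (lam mu : R) : seq R :=
  undup [seq p.2 | p <- line_pts A lam mu].

Definition card_inter (R : realType) (s t : seq R) : nat :=
  size [seq y <- s | y \in t].

(* Main.v *)
Require Import Defs.
From HB Require Import structures.
From mathcomp Require Import all_boot all_order all_algebra.
From mathcomp Require Import reals exp.
From mathcomp Require Import ring lra.
Import Order.TTheory GRing.Theory Num.Theory.
Local Open Scope ring_scope.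

Lemma count_sub (T : eqType) (A s : seq T) (p : pred T) :
  uniq A -> uniq s -> {subset s <= A} ->
  count p s = count (fun a => (a \in s) && p a) A.
Proof.
move=> uA us sA.
have pe : perm_eq [seq a <- A | a \in s] s.
  apply: uniq_perm; first exact: filter_uniq.
    exact: us.
  move=> x; rewrite mem_filter; apply/andP/idP => [[]//|xs]; split=> //.
  exact: sA.
by rewrite -((permP pe) p) count_filter; apply: eq_count => x /=; rewrite andbC.
Qed.

Lemma count_real (R : realType) (T : Type) (s : seq T) (p : pred T) :
  (count p s)%:R = \sum_(x <- s) ((p x)%:R : R).
Proof.
elim: s => [|x s IH]; first by rewrite big_nil.
by rewrite big_cons /= natrD IH.
Qed.

Lemma cauchy (R : realType) (T : Type) (A : seq T) (c : T -> R) :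
  (\sum_(a <- A) c a) ^+ 2 <= (size A)%:R * \sum_(a <- A) c a ^+ 2.
Proof.
elim: A => [|x A IH]; first by rewrite !big_nil expr0n /= mul0r.
rewrite !big_cons /=.
set S := \sum_(a <- A) c a in IH *; set Q := \sum_(a <- A) c a ^+ 2 in IH *.
set N := (size A)%:R in IH *.
have N0 : 0 <= N by rewrite /N ler0n.
have Q0 : 0 <= Q by rewrite /Q sumr_ge0 // => a _; rewrite sqr_ge0.
rewrite -natr1 -/N.
have [N0e|Np] := eqVneq N 0.
  rewrite N0e mul0r in IH.
  have S0 : S = 0.
    by apply/eqP; rewrite -sqrf_eq0 eq_le IH sqr_ge0.
  rewrite S0 N0e; nra.
have Npos : 0 < N by rewrite lt_neqAle eq_sym Np N0.
have key : N * (2 * S * c x) <= N * (Q + N * c x ^+ 2).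
  have := sqr_ge0 (S - N * c x); nra.
have := key; rewrite ler_pM2l // => key'.
nra.
Qed.

Lemma line_pts_uniq (R : realType) (A : seq R) lam mu :
  uniq A -> uniq (line_pts A lam mu).
Proof.
move=> uA; apply: filter_uniq; apply: allpairs_uniq => //.
by move=> [a b] [c d] _ _ /= [-> ->].
Qed.

Lemma Yproj_uniq (R : realType) (A : seq R) lam mu : uniq (Yproj A lam mu).
Proof. exact: undup_uniq. Qed.

Lemma Yproj_sub (R : realType) (A : seq R) lam mu : {subset Yproj A lam mu <= A}.
Proof.
move=> y; rewrite mem_undup => /mapP [p].
rewrite mem_filter => /andP [_ /allpairsP [[a b] [_ bA ->]]] -> //.
Qed.

Lemma Yproj_size (R : realType) (A : seq R) lam mu :
  uniq A -> lam != 0 -> size (Yproj A lam mu) = size (line_pts A lam mu).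
Proof.
move=> uA l0; rewrite /Yproj undup_id ?size_map //.
rewrite map_inj_in_uniq; first exact: line_pts_uniq.
move=> [a b] [c d]; rewrite !mem_filter /= => /andP [/eqP eb _] /andP [/eqP ed _] ebd.
subst b d; move/addIr: ebd => /(mulfI l0) ->; done.
Qed.

Theorem lemma1 (R : realType) (A : seq R) (d0 : R) (K : nat)
    (lam mu : 'I_K -> R) :
  uniq A -> (0 < size A)%N -> 0 <= d0 ->
  (forall i, lam i != 0) ->
  (forall i, powR (size A)%:R (1 - d0) <= (size (line_pts A (lam i) (mu i)))%:R) ->
  (K%:R ^+ 2 * powR (size A)%:R (- (2 * d0)) / 2 <=
   (#|[set ij : 'I_K * 'I_K |
       powR (size A)%:R (1 - 2 * d0) / 2 <=
       (card_inter (Yproj A (lam ij.1) (mu ij.1))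
                   (Yproj A (lam ij.2) (mu ij.2)))%:R]|)%:R).
Proof.
move=> uA nA d0ge l0 hl.
set N : R := (size A)%:R.
have Npos : 0 < N by rewrite /N ltr0n.
have N0 : N != 0 by rewrite gt_eqF.
set q := N `^ (- d0).
have q0 : 0 <= q by exact: powR_ge0.
have hN1 : N `^ (1 - d0) = N * q.
  by rewrite powRD ?powRr1 ?ltW //; apply/implyP.
have hN2 : N `^ (- (2 * d0)) = q ^+ 2.
  have -> : - (2 * d0) = - d0 + - d0 by lra.
  by rewrite powRD ?expr2 //; apply/implyP.
have hN3 : N `^ (1 - 2 * d0) = N * q ^+ 2.
  by rewrite -hN2 powRD ?powRr1 ?ltW //; apply/implyP.
rewrite hN2 hN3 -/N.
set Y := fun i => Yproj A (lam i) (mu i).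
set I := fun a i => (((a \in Y i) : nat)%:R : R).
set good := [set ij : 'I_K * 'I_K | _].
set M := #|good|.
have hf : forall ij : 'I_K * 'I_K,
    (card_inter (Y ij.1) (Y ij.2))%:R = \sum_(a <- A) I a ij.1 * I a ij.2.
  move=> ij; rewrite /card_inter size_filter.
  rewrite (@count_sub _ _ _ _ uA (Yproj_uniq _ _ _ _) (@Yproj_sub R A (lam ij.1) (mu ij.1))).
  rewrite count_real; apply: eq_bigr => a _ /=; rewrite /I.
  by case: (a \in Y ij.1); case: (a \in Y ij.2); rewrite /= ?mul1r ?mul0r.
have hsz : forall i, (size (Y i))%:R = \sum_(a <- A) I a i.
  move=> i; rewrite -count_predT.
  rewrite (@count_sub _ _ _ _ uA (Yproj_uniq _ _ _ _) (@Yproj_sub R A (lam i) (mu i))).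
  by rewrite count_real; apply: eq_bigr => a _ /=; rewrite andbT.
pose P : R := \sum_(ij : 'I_K * 'I_K) (card_inter (Y ij.1) (Y ij.2))%:R.
have hP : P = \sum_(a <- A) (\sum_i I a i) ^+ 2.
  rewrite /P (eq_bigr _ (fun ij _ => hf ij)) exchange_big /=.
  apply: eq_bigr => a _; rewrite expr2 mulr_suml.
  rewrite -(pair_bigA _ (fun i j => I a i * I a j)) /=; apply: eq_bigr => i _; rewrite mulr_sumr //.
have hS : \sum_(a <- A) \sum_i I a i = \sum_i (size (Y i))%:R.
  by rewrite exchange_big /=; apply: eq_bigr => i _; rewrite hsz.
have hSlow : K%:R * (N * q) <= \sum_i (size (Y i))%:R.
  have -> : K%:R * (N * q) = \sum_(i : 'I_K) (N * q).
    by rewrite sumr_const card_ord mulr_natl.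
  apply: ler_sum => i _; rewrite -hN1 /Y Yproj_size //.
have CS := @cauchy R R A (fun a => \sum_i I a i).
rewrite -hP hS -/N in CS.
pose T : R := N * q ^+ 2 / 2.
have T0 : 0 <= T by rewrite /T; apply: divr_ge0 => //; apply: mulr_ge0; [exact: ltW | exact: sqr_ge0].
have step : forall ij : 'I_K * 'I_K,
    (card_inter (Y ij.1) (Y ij.2))%:R <= ((ij \in good) : nat)%:R * N + T.
  move=> ij; case: (boolP (ij \in good)) => g /=.
    rewrite mul1r; apply: ler_wpDr => //; rewrite /N ler_nat.
    rewrite /card_inter size_filter (leq_trans (count_size _ _)) //.
    exact: uniq_leq_size (Yproj_uniq _ _ _ _) (@Yproj_sub R A (lam ij.1) (mu ij.1)).
  rewrite mul0r add0r; rewrite inE -ltNge in g; exact: ltW.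
have hup : P <= M%:R * N + K%:R ^+ 2 * T.
  rewrite /P; apply: le_trans (ler_sum _ (fun ij _ => step ij)) _.
  rewrite big_split /= sumr_const card_prod card_ord -mulr_suml.
  have -> : \sum_(ij : 'I_K * 'I_K) (((ij \in good) : nat)%:R : R) = M%:R.
    rewrite /M -sum1_card natr_sum [RHS]big_mkcond /=; apply: eq_bigr => ij _.
    by case: (ij \in good).
  by rewrite -[T *+ _]mulr_natl natrM -expr2.
move: CS hSlow hup; rewrite /T.
set S := \sum_i _.
move: (P) => P' CS hSlow hup.
have K0 : 0 <= K%:R * (N * q) :> R.
  by apply: mulr_ge0 => //; apply: mulr_ge0 => //; exact: ltW.
have h1 : (K%:R * (N * q)) ^+ 2 <= S ^+ 2.
  by rewrite ler_sqr // ?nnegrE // (le_trans K0).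
have h2 : N * (N * (K%:R ^+ 2 * q ^+ 2 / 2)) <= N * (N * M%:R).
  rewrite -subr_ge0.
  have hNP : N * P' <= N * (M%:R * N + K%:R ^+ 2 * (N * q ^+ 2 / 2)).
    by rewrite ler_pM2l.
  have e : (K%:R * (N * q)) ^+ 2 = N * (N * (K%:R ^+ 2 * q ^+ 2)) by ring.
  rewrite e in h1.
  lra.
by rewrite !ler_pM2l in h2.
Qed.
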